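(* Let $X$ be a Tychonoff space and let $cX$, $dX$ be compactifications of $X$ with $dX\preceq cX$, witnessed by a continuous map $\varphi: cX\to dX$. Suppose $X$ is an $F_{\sigma\delta}$ subset of $cX$ and that the family $\mathcal F(cX,dX)$ is at most countable. Then $X$ is an $F_{\sigma\delta}$ subset of $dX$.
   Context: A compactification of $X$ is a pair $(cX,\varphi_c)$ with $cX$ compact Hausdorff and $\varphi_c$ a homeomorphic embedding of $X$ onto a dense subspace of $cX$; we identify $X$ with its image in $cX$ (and in $dX$). We write $dX\preceq cX$ if there exists a continuous map $\varphi:cX\to dX$ with $\varphi_d=\varphi\circ\varphi_c$. For such $\varphi$, $\mathcal F(cX,dX):=\{\varphi^{-1}(x) : x\in dX,\ \varphi^{-1}(x)\text{ is not a singleton}\}$. An $F_{\sigma\delta}$ set is a countable intersection of countable unions of closed sets. *)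

(* Defs.v *)
From HB Require Import structures.
From mathcomp Require Import all_boot all_order all_algebra.
From mathcomp Require Import all_classical all_reals all_analysis.
Set Implicit Arguments. Unset Strict Implicit. Unset Printing Implicit Defensive.
Import Order.TTheory GRing.Theory Num.Theory.
Local Open Scope classical_set_scope.

Definition tychonoff_space (X : topologicalType) : Prop :=
  completely_regular_space X /\ accessible_space X.

Definition embedding (X Y : topologicalType) (f : X -> Y) : Prop :=
  [/\ continuous f, injective f &
      forall U : set X, open U -> exists V : set Y, open V /\ f @^-1` V = U].

Definition compactification (X cX : topologicalType) (fc : X -> cX) : Prop :=
  [/\ compact [set: cX], hausdorff_space cX, embedding fc & dense (range fc)].

Definition Fsigmadelta (T : topologicalType) (A : set T) : Prop :=
  exists F : nat -> nat -> set T,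
    (forall n m, closed (F n m)) /\ A = \bigcap_n \bigcup_m F n m.

Definition nontrivial_fibres (cX dX : topologicalType) (phi : cX -> dX)
  : set (set cX) :=
  [set phi @^-1` [set y] | y in
     [set y : dX | ~ exists x : cX, phi @^-1` [set y] = [set x]]].

(* Main.v *)
Require Import Defs.
From HB Require Import structures.
From mathcomp Require Import all_boot all_order all_algebra.
From mathcomp Require Import all_classical all_reals all_analysis.
Local Open Scope classical_set_scope.

Lemma closed_image (cX dX : topologicalType) (phi : cX -> dX) (A : set cX) :
  compact [set: cX] -> hausdorff_space dX -> continuous phi -> closed A ->
  closed (phi @` A).
Proof.
move=> cpt hd cphi clA; apply: compact_closed => //.
apply: continuous_compact; first exact: continuous_subspaceT.
exact: (subclosed_compact clA cpt).
Qed.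

Lemma phi_surj (X cX dX : topologicalType) (fd : X -> dX) (phi : cX -> dX) :
  compact [set: cX] -> hausdorff_space dX -> continuous phi ->
  dense (range fd) -> (forall x, (phi @` setT) (fd x)) -> forall y, exists p, phi p = y.
Proof.
move=> cpt hd cphi dn hfd y; apply: contrapT => ny.
have cl : closed (phi @` setT) by apply: closed_image.
have [z [zn [x _ ezx]]] := dn (~` (phi @` setT)) (ex_intro _ y (fun '(ex_intro2 p _ e) => ny (ex_intro _ p e)))
  (closed_openC cl).
by apply: zn; rewrite -ezx; exact: hfd.
Qed.

Lemma fibre_sing (X cX dX : topologicalType) (fc : X -> cX) (fd : X -> dX)
  (phi : cX -> dX) :
  compactification fc -> compactification fd ->
  continuous phi -> fd = phi \o fc -> forall p x, phi p = fd x -> p = fc x.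
Proof.
rewrite /compactification /embedding.
move=> H1 H2.
case: H1 => _ hc emc dc; case: emc => cfc _ _.
case: H2 => _ _ emd _; case: emd => _ _ emb.
move=> cphi efd p x ep.
apply/esym; apply: hc; rewrite /cluster /= => A B nA nB.
have : nbhs x (fc @^-1` A) by exact: cfc.
rewrite nbhsE => -[U [oU Ux] UA].
have [V [oV eV]] := emb U oU.
rewrite nbhsE in nB; case: nB => B' [oB' B'p] B'B.
have o2 : open (B' `&` phi @^-1` V) by apply: openI => //; apply: (proj1 (continuousP _) cphi).
have [w [[z1 z2] [z _ ezw]]] : (B' `&` phi @^-1` V) `&` range fc !=set0.
  apply: dc => //; exists p; split => //=; rewrite ep; move: Ux; rewrite -eV; exact.
subst w.
have : U z by rewrite -eV /= efd; exact: z2.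
by move=> /UA Az; exists (fc z); split => //; exact: B'B.
Qed.

Definition Fs (T : topologicalType) (F : nat -> nat -> set T) (s : seq nat) : set T :=
  \bigcap_(i in [set i | (i < size s)%N]) F i (nth 0%N s i).

Arguments Fs {T}.

Lemma sep_compact (T : topologicalType) (F : nat -> nat -> set T) (K : set T) :
  (forall n m, closed (F n m)) -> compact K ->
  K `&` (\bigcap_n \bigcup_m F n m) = set0 ->
  exists C : nat -> set T, (forall j, closed (C j)) /\
    (\bigcap_n \bigcup_m F n m) `<=` \bigcup_j C j /\ forall j, K `&` C j = set0.
Proof.
move=> clF cK KY.
pose C j := match @unpickle (seq nat) j with
  | Some s => if pselect (K `&` Fs F s = set0) then Fs F s else set0
  | None => set0 end.
exists C; split.
  move=> j; rewrite /C; case: (unpickle j) => [s|]; last exact: closed0.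
  case: pselect => H; last exact: closed0.
  by apply: closed_bigI => i _; exact: clF.
split; last first.
  move=> j; rewrite /C; case: (unpickle j) => [s|]; last exact: setI0.
  by case: pselect => H //; exact: setI0.
move=> p Yp.
have /choice [sg hsg] : forall n, exists m, F n m p.
  by move=> n; have [m _ ?] := Yp n I; exists m.
have Kc : K `<=` cover [set: nat] (fun n => ~` F n (sg n)).
  move=> k Kk; apply: contrapT => nk.
  have : (K `&` \bigcap_n \bigcup_m F n m) k.
    split => // n _; exists (sg n) => //; apply: contrapT => nF; apply: nk.
    by exists n.
  by rewrite KY.
have ncK := iffLR (compact_near_coveringP K) cK.
have := ncK nat \oo (fun i x => exists2 n, (n < i)%N & ~ F n (sg n) x) _.
case.
  move=> x Kx; have [n nF] : exists n, ~ F n (sg n) x.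
    apply: contrapT => /forallNP hn.
    have : (K `&` \bigcap_n \bigcup_m F n m) x.
      split => // n _; exists (sg n) => //; exact: contrapT (hn n).
    by rewrite KY.
  have nb : nbhs x (~` F n (sg n)).
    by apply: open_nbhs_nbhs; split => //; exact: closed_openC.
  exists (~` F n (sg n), [set i | (n < i)%N]) => /=.
    by split => //; exists n.+1.
  by move=> [x' i] /= [h1 h2]; exists n.
move=> N _ HN.
have KD' : forall k, K k -> exists2 i, (i < N)%N & ~ F i (sg i) k.
  by move=> k Kk; exact: (HN N (leqnn N) k Kk).
have ltN i : (i < N)%N -> (i < N)%N by [].
pose s := mkseq sg N.
have Fsp : Fs F s p.
  move=> i /=; rewrite size_mkseq => iN; rewrite nth_mkseq //.
have KFs : K `&` Fs F s = set0.
  apply/seteqP; split => // k [Kk Fk].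
  have [i iD nFi] := KD' k Kk.
  apply: nFi; have := Fk i; rewrite /= size_mkseq nth_mkseq; last exact: ltN.
  by apply; exact: ltN.
exists (pickle s) => //; rewrite /C pickleK.
by case: pselect.
Qed.

Theorem corollary3p4 (X cX dX : topologicalType) (fc : X -> cX) (fd : X -> dX)
  (phi : cX -> dX) :
  tychonoff_space X ->
  compactification fc -> compactification fd ->
  continuous phi -> fd = phi \o fc ->
  Fsigmadelta (range fc) ->
  countable (nontrivial_fibres phi) ->
  Fsigmadelta (range fd).
Proof.
move=> _ cc cd cphi efd [F [clF eY]] cnt.
have fib := @fibre_sing _ _ _ fc fd phi cc cd cphi efd.
have [cXc _ _ _] := cc.
have [_ hd _ dd] := cd.
have surj : forall y, exists p, phi p = y.
  apply: (@phi_surj X cX dX fd phi) => // x; exists (fc x) => //; by rewrite efd.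
have [g ginj] := countable_injP _ cnt.
pose NS y := ~ exists p : cX, phi @^-1` [set y] = [set p].
have NF y : NS y -> (nontrivial_fibres phi) (phi @^-1` [set y]) by move=> ?; exists y.
have /choice [V HV] : forall k : nat, exists Vk : nat -> set dX,
    [/\ (forall m, closed (Vk m)), range fd `<=` \bigcup_m Vk m &
        forall y, NS y -> g (phi @^-1` [set y]) = k -> ~ (\bigcup_m Vk m) y].
  move=> k; case: (pselect (exists y, NS y /\ g (phi @^-1` [set y]) = k)); last first.
    move=> nex; exists (fun _ => setT); split => //.
      by move=> z _; exists 0%N.
    by move=> y NSy gy; exfalso; apply: nex; exists y.
  move=> [y [NSy gy]].
  have yZ : ~ range fd y.
    move=> [x _ exy]; apply: NSy; exists (fc x).
    apply/seteqP; split => p /=.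
      by move=> e; apply: fib; rewrite e.
    by move=> ->; rewrite -exy efd.
  have clK : closed (phi @^-1` [set y]).
    apply: preimage_closed; first by move=> ? _; exact: cphi.
    by apply: accessible_closed_set1; exact: hausdorff_accessible.
  have cK : compact (phi @^-1` [set y]) by exact: (subclosed_compact clK cXc).
  have KY : phi @^-1` [set y] `&` (\bigcap_n \bigcup_m F n m) = set0.
    apply/seteqP; split => // p [/= py]; rewrite -eY => -[x _ px].
    by apply: yZ; exists x => //; rewrite efd /= px.
  have [C [clC [YC KC]]] := @sep_compact _ F _ clF cK KY.
  exists (fun m => phi @` C m); split.
  - by move=> m; apply: closed_image.
  - move=> z [x _ <-]; have : (\bigcap_n \bigcup_m F n m) (fc x) by rewrite -eY; exists x.
    move=> /YC [j _ Cj]; exists j => //; exists (fc x) => //; by rewrite efd.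
  - move=> y' NSy' gy' [j _ [q Cq qy']].
    have e : phi @^-1` [set y'] = phi @^-1` [set y].
      apply: ginj; rewrite ?inE; [exact: NF|exact: NF|by rewrite gy gy'].
    have qK : (phi @^-1` [set y]) q by rewrite -e.
    have : (phi @^-1` [set y] `&` C j) q by [].
    by rewrite KC.
exists (fun n m => if odd n then V n./2 m else phi @` F n./2 m); split.
  move=> n m; case: (odd n); first by have [] := HV n./2.
  exact: closed_image.
apply/seteqP; split.
  move=> z Zz n _; case: (odd n).
    by have [_ ZV _] := HV n./2; exact: ZV.
  case: Zz => x _ <-.
  have : (\bigcap_n \bigcup_m F n m) (fc x) by rewrite -eY; exists x.
  move=> /(_ n./2 I) [m _ Fm]; exists m => //; exists (fc x) => //; by rewrite efd.
move=> y Hy.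
case: (pselect (NS y)) => [NSy|].
  have := Hy (g (phi @^-1` [set y])).*2.+1 I.
  have -> : odd (g (phi @^-1` [set y])).*2.+1 by rewrite /= odd_double.
  have -> : ((g (phi @^-1` [set y])).*2.+1)./2 = g (phi @^-1` [set y]).
    exact: (half_bit_double _ true).
  by have [_ _ HVn] := HV (g (phi @^-1` [set y])); move=> Hu; case: (HVn y NSy erefl Hu).
move=> /contrapT [p ep].
have Yp : (\bigcap_n \bigcup_m F n m) p.
  move=> n _; have := Hy n.*2 I; rewrite odd_double doubleK => -[m _ [q Fq qy]].
  exists m => //; have : (phi @^-1` [set y]) q by [].
  by rewrite ep => <-.
move: Yp; rewrite -eY => -[x _ px].
have : (phi @^-1` [set y]) p by rewrite ep.
by move=> /= <-; exists x => //; rewrite efd /= px.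
Qed.
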